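(* For $n=2,3,\dots$ let $\Omega_n=\{1,\dots,n\}$, $\mathcal P_n=\mathcal P(\Omega_n)$, and $g_n$ the Fisher co-metric on $\mathcal P_n$. Let $\{h_n\}_{n\ge2}$ be given, where $h_n$ is a contravariant tensor field of degree 2 on $\mathcal P_n$ mapping each $p\in\mathcal P_n$ continuously to a bilinear form $h_{n,p}:T_p^*(\mathcal P_n)^2\to\mathbb R$ (not assumed symmetric or positive). The following are equivalent: (i) there is $c\in\mathbb R$ with $h_n=c\,g_n$ for all $n$; (ii) for all $m\le n$ and every Markov co-embedding $\Psi:\mathcal P_n\to\mathcal P_m$, $$h_{m,\Psi(q)}(\alpha,\beta)=h_{n,q}(\Psi_q^*\alpha,\Psi_q^*\beta)\quad\forall q\in\mathcal P_n,\ \forall\alpha,\beta\in T^*_{\Psi(q)}(\mathcal P_m).$$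
   Context: $\mathcal P(\Omega)$ is the manifold of strictly positive probability distributions on a finite set $\Omega$. The Fisher co-metric is the inner product on $T^*_p(\mathcal P(\Omega))$ with $g_p((d\langle A\rangle)_p,(d\langle B\rangle)_p)=\mathrm{Cov}_p(A,B)$ for $A,B\in\mathbb R^\Omega$, where $\langle A\rangle(p)=\sum_\omega p(\omega)A(\omega)$ (every covector is of this form). A Markov map $\mathcal P(\Omega_1)\to\mathcal P(\Omega_2)$ is a map $p\mapsto\sum_xW(\cdot|x)p(x)$ for a channel $W$ with $\forall y\,\exists x\,W(y|x)>0$. A Markov map $\Phi:\mathcal P_m\to\mathcal P_n$ is a Markov embedding if some Markov map $\Psi:\mathcal P_n\to\mathcal P_m$ satisfies $\Psi\circ\Phi=\mathrm{id}_{\mathcal P_m}$; a Markov map $\Psi$ admitting such a $\Phi$ is a Markov co-embedding. $\Psi^*_q$ is the transpose of $(d\Psi)_q$. *)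

(* Defs.v *)
From mathcomp Require Import all_boot all_order all_algebra.
From mathcomp Require Export reals.
Set Implicit Arguments. Unset Strict Implicit. Unset Printing Implicit Defensive.
Import Order.TTheory GRing.Theory Num.Theory.
Local Open Scope ring_scope.

Section Defs.
Variable R : realType.

Definition posdist (n : nat) (p : 'I_n -> R) : Prop :=
  (forall i, 0 < p i) /\ \sum_(i < n) p i = 1.

Definition expect (n : nat) (p A : 'I_n -> R) : R := \sum_(i < n) p i * A i.

(* Fisher co-metric: g_p(d<A>, d<B>) = Cov_p(A,B) *)
Definition fisher_cometric (n : nat) (p A B : 'I_n -> R) : R :=
  expect p (fun i => A i * B i) - expect p A * expect p B.

(* A channel from 'I_n to 'I_m : W y x = W(y|x), with the Markov-map
   condition forall y, exists x, W(y|x) > 0. *)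
Definition markov_channel (n m : nat) (W : 'I_m -> 'I_n -> R) : Prop :=
  (forall y x, 0 <= W y x) /\
  (forall x, \sum_(y < m) W y x = 1) /\
  (forall y, exists x, 0 < W y x).

Definition markov_map (n m : nat) (W : 'I_m -> 'I_n -> R) (p : 'I_n -> R)
  : 'I_m -> R := fun y => \sum_(x < n) W y x * p x.

(* Pullback of covectors: Psi^*_q (d<A>)_{Psi q} = (d<A'>)_q with
   A'(x) = sum_y W(y|x) A(y) (independent of q). *)
Definition pullback (n m : nat) (W : 'I_m -> 'I_n -> R) (A : 'I_m -> R)
  : 'I_n -> R := fun x => \sum_(y < m) W y x * A y.

Definition markov_coembedding (n m : nat) (W : 'I_m -> 'I_n -> R) : Prop :=
  markov_channel W /\
  exists V : 'I_n -> 'I_m -> R, markov_channel V /\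
    forall p : 'I_m -> R, posdist p -> markov_map W (markov_map V p) = p.

(* A contravariant 2-tensor field on P_n, given as
   h : (point p) -> (A : R^n) -> (B : R^n) -> R, meaning
   h_p((d<A>)_p, (d<B>)_p).  Since every covector is (d<A>)_p and
   (d<A>)_p = (d<A'>)_p iff A - A' is constant, a bilinear form on T^*_p
   is the same as a bilinear form on R^n vanishing on constants in each
   argument. *)
Definition cotangent_bilinear (n : nat) (b : ('I_n -> R) -> ('I_n -> R) -> R)
  : Prop :=
  (forall a A A' B, b (fun i => a * A i + A' i) B = a * b A B + b A' B) /\
  (forall a A B B', b A (fun i => a * B i + B' i) = a * b A B + b A B') /\
  (forall c B, b (fun _ => c) B = 0) /\
  (forall c A, b A (fun _ => c) = 0).

(* continuity of p |-> h_p on P_n (entrywise, equivalently in the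
   finite-dimensional space of bilinear forms) *)
Definition tensor_field_continuous (n : nat)
  (h : ('I_n -> R) -> ('I_n -> R) -> ('I_n -> R) -> R) : Prop :=
  forall A B p, posdist p -> forall eps : R, 0 < eps ->
    exists2 delta : R, 0 < delta &
      forall q, posdist q -> (forall i, `|q i - p i| < delta) ->
        `|h q A B - h p A B| < eps.

Definition contravariant_2tensor_field (n : nat)
  (h : ('I_n -> R) -> ('I_n -> R) -> ('I_n -> R) -> R) : Prop :=
  (forall p, posdist p -> cotangent_bilinear (h p)) /\
  tensor_field_continuous h.

End Defs.

(* Main.v *)
Require Import Defs.
From mathcomp Require Import all_boot all_order all_algebra.
From Stdlib Require Import FunctionalExtensionality.
From mathcomp Require Import ring lra zify.
Import Order.TTheory GRing.Theory Num.Theory.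
Set Implicit Arguments. Unset Strict Implicit. Unset Printing Implicit Defensive.
Local Open Scope ring_scope.

Lemma sum_delta (R : realType) (I : finType) (a : I) (F : I -> R) :
  \sum_i (i == a)%:R * F i = F a.
Proof.
rewrite (bigD1 a) //= eqxx mul1r big1 ?addr0 // => i /negbTE ->.
by rewrite mul0r.
Qed.

Lemma sum_delta' (R : realType) (I : finType) (a : I) (F : I -> R) :
  \sum_i (a == i)%:R * F i = F a.
Proof.
rewrite -[RHS](sum_delta a); apply: eq_bigr => i _; by rewrite eq_sym.
Qed.

Lemma sum_delta1 (R : realType) (I : finType) (a : I) :
  \sum_i (a == i)%:R = 1 :> R.
Proof. rewrite -[RHS](sum_delta' a (fun _ => 1)); apply: eq_bigr => i _; by rewrite mulr1. Qed.

Definition Wf (R : realType) n m (f : 'I_n -> 'I_m) : 'I_m -> 'I_n -> R :=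
  fun y x => (f x == y)%:R.

Lemma pullback_Wf (R : realType) n m (f : 'I_n -> 'I_m) (A : 'I_m -> R) x :
  pullback (Wf R f) A x = A (f x).
Proof. by rewrite /pullback /Wf sum_delta'. Qed.

Lemma expect_pull (R : realType) n m (W : 'I_m -> 'I_n -> R) q C :
  expect q (pullback W C) = expect (markov_map W q) C.
Proof.
rewrite /expect /pullback /markov_map.
under eq_bigr => x _ do rewrite mulr_sumr.
rewrite exchange_big /=; apply: eq_bigr => y _; rewrite mulr_suml.
by apply: eq_bigr => x _; rewrite mulrA [q x * _]mulrC.
Qed.

Lemma cov_pull (R : realType) n m (W : 'I_m -> 'I_n -> R)
  (Hdet : forall x C D, pullback W C x * pullback W D x =
                        pullback W (fun y => C y * D y) x) q A B :
  fisher_cometric q (pullback W A) (pullback W B) =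
  fisher_cometric (markov_map W q) A B.
Proof.
rewrite /fisher_cometric -!expect_pull; congr (_ - _).
rewrite /expect; apply: eq_bigr => x _; by rewrite Hdet.
Qed.

Lemma Wf_det (R : realType) n m (f : 'I_n -> 'I_m) x C D :
  pullback (Wf R f) C x * pullback (Wf R f) D x =
  pullback (Wf R f) (fun y => C y * D y) x.
Proof. by rewrite !pullback_Wf. Qed.

Lemma sum_indic (R : realType) (I : finType) (P : pred I) :
  \sum_i (P i)%:R = #|P|%:R :> R.
Proof.
rewrite (eq_bigr (fun i => if P i then 1 else 0)); last by move=> i _; case: (P i).
by rewrite -big_mkcond /= sumr_const.
Qed.

Lemma Wf_coemb (R : realType) n m (f : 'I_n -> 'I_m) :
  (forall y, exists x, f x = y) -> markov_coembedding (Wf R f).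
Proof.
move=> surj.
have cpos : forall y, (0 < #|[pred x | f x == y]|)%N.
  move=> y; case: (surj y) => x fx; apply/card_gt0P; exists x; by rewrite inE fx.
split.
  split; first by move=> y x; rewrite /Wf ler0n.
  split; first by move=> x; rewrite /Wf sum_delta1.
  move=> y; case: (surj y) => x fx; exists x; by rewrite /Wf fx eqxx ltr01.
pose c y : R := (#|[pred x | f x == y]|)%:R.
have c0 : forall y, c y != 0 by move=> y; rewrite /c pnatr_eq0 -lt0n cpos.
exists (fun x y => (f x == y)%:R / c y); split.
  split; first by move=> x y; rewrite divr_ge0 // ler0n.
  split.
    move=> y; rewrite -mulr_suml sum_indic mulfV //; exact: (c0 y).
  move=> x; exists (f x); rewrite eqxx mul1r invr_gt0 lt0r c0 /c ler0n //.
move=> p _; apply: functional_extensionality => y.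
rewrite /markov_map /Wf.
have inner : forall x, \sum_y' (f x == y')%:R / c y' * p y' = p (f x) / c (f x).
  move=> x; rewrite -(sum_delta' (f x) (fun y' => p y' / c y')).
  by apply: eq_bigr => y' _; rewrite mulrAC -mulrA.
under eq_bigr => x _ do rewrite inner.
rewrite (eq_bigr (fun x => (f x == y)%:R * (p y / c y))); last first.
  by move=> x _; case: eqP => [->|]; rewrite ?mul0r.
rewrite -mulr_suml sum_indic mulrC -mulrA mulVf ?mulr1 //.
Qed.

Lemma mm_posdist (R : realType) n m (W : 'I_m -> 'I_n -> R) q :
  markov_channel W -> posdist q -> posdist (markov_map W q).
Proof.
move=> [W0 [W1 W2]] [q0 q1]; split.
  move=> y; case: (W2 y) => x0 Hx0; rewrite /markov_map (bigD1 x0) //=.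
  have : 0 <= \sum_(i < n | i != x0) W y i * q i.
    by apply: sumr_ge0 => i _; apply: mulr_ge0 => //; apply: ltW.
  have : 0 < W y x0 * q x0 by apply: mulr_gt0.
  lra.
rewrite /markov_map exchange_big /=.
rewrite -q1; apply: eq_bigr => x _; by rewrite -mulr_suml W1 mul1r.
Qed.

Definition unif (R : realType) n : 'I_n -> R := fun _ => n%:R^-1.
Arguments unif : clear implicits.

Lemma unif_posdist (R : realType) n : (0 < n)%N -> posdist (unif R n).
Proof.
move=> n0; split; first by move=> i; rewrite /unif invr_gt0 ltr0n.
rewrite /unif sumr_const cardT size_enum_ord -[_ *+ n]mulr_natr mulVf // pnatr_eq0 -lt0n n0 //.
Qed.

Definition dlt (R : realType) n (a : 'I_n) : 'I_n -> R := fun i => (i == a)%:R.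

Lemma mm_lin (R : realType) n m (W : 'I_m -> 'I_n -> R) a b p r :
  markov_map W (fun i => a * p i + b * r i) =
  (fun y => a * markov_map W p y + b * markov_map W r y).
Proof.
apply: functional_extensionality => y; rewrite /markov_map !mulr_sumr -big_split /=.
by apply: eq_bigr => x _; rewrite mulrDr !mulrA [W y x * a]mulrC [W y x * b]mulrC.
Qed.

Lemma coemb_det (R : realType) n m (W : 'I_m -> 'I_n -> R) :
  (0 < m)%N -> markov_coembedding W ->
  forall x, exists y0, forall y, W y x = (y0 == y)%:R.
Proof.
move=> m0 [[W0 [W1 W2]] [V [[V0 [V1 V2]] HV]]].
have key : forall y0 y, \sum_x W y x * V x y0 = (y == y0)%:R.
  move=> y0 y.
  pose p2 : 'I_m -> R := fun i => 2^-1 * unif R m i + 2^-1 * dlt R y0 i.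
  have Hu := unif_posdist R m0.
  have Hp2 : posdist p2.
    case: Hu => u0 u1; split.
      move=> i; rewrite /p2 /dlt; have := u0 i; have : 0 <= (i == y0)%:R :> R by rewrite ler0n.
      lra.
    rewrite /p2 big_split /= -!mulr_sumr u1.
    rewrite (eq_bigr (fun i => (y0 == i)%:R)) ?sum_delta1; last by move=> i _; rewrite /dlt eq_sym.
    lra.
  have E := HV _ Hp2; rewrite /p2 !mm_lin (HV _ Hu) in E.
  have := congr1 (fun f => f y) E => /= E'.
  have -> : \sum_x W y x * V x y0 = markov_map W (markov_map V (dlt R y0)) y.
    rewrite /markov_map; apply: eq_bigr => x _; congr (_ * _).
    rewrite (eq_bigr (fun i => (y0 == i)%:R * V x i)) ?sum_delta' //.
    by move=> i _; rewrite /dlt eq_sym mulrC.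
  rewrite /dlt in E' *.
  apply: (@mulfI _ (2^-1)); first by rewrite invr_eq0 pnatr_eq0.
  exact: addrI E'.
move=> x; case: (V2 x) => y0 Hy0; exists y0 => y.
have Wz : forall y, y != y0 -> W y x = 0.
  move=> y' ny'; have := key y0 y'; rewrite (negbTE ny') /= mulr0n (bigD1 x) //= => K.
  have S0 : 0 <= \sum_(i < n | i != x) W y' i * V i y0.
    by apply: sumr_ge0 => i _; apply: mulr_ge0.
  have := W0 y' x => Wp.
  have : W y' x * V x y0 <= 0 by lra.
  rewrite pmulr_lle0 // => Wn; by apply/eqP; rewrite eq_le Wn Wp.
have [E|ne] := eqVneq y0 y; last by rewrite Wz // eq_sym.
rewrite -E.
have := W1 x; rewrite (bigD1 y0) //= big1 ?addr0 //.
Qed.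

Lemma dir1 (R : realType)
  (h : forall n : nat, ('I_n -> R) -> ('I_n -> R) -> ('I_n -> R) -> R) :
  (exists c : R, forall n : nat, (2 <= n)%N ->
     forall p : 'I_n -> R, posdist p ->
     forall A B : 'I_n -> R, h n p A B = c * fisher_cometric p A B) ->
  (forall m n : nat, (2 <= m)%N -> (m <= n)%N ->
     forall W : 'I_m -> 'I_n -> R, markov_coembedding W ->
     forall q : 'I_n -> R, posdist q ->
     forall A B : 'I_m -> R,
       h m (markov_map W q) A B = h n q (pullback W A) (pullback W B)).
Proof.
move=> [c Hc] m n Hm Hmn W Hco q Hq A B.
have Hn : (2 <= n)%N by apply: leq_trans Hmn.
rewrite Hc //; last by apply: mm_posdist => //; case: Hco.
rewrite Hc // cov_pull //.
move=> x C D; have [y0 Hy0] := coemb_det (ltnW Hm) Hco x.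
have E : forall F, pullback W F x = F y0.
  by move=> F; rewrite /pullback (eq_bigr (fun y => (y0 == y)%:R * F y)) ?sum_delta' // => y _; rewrite Hy0.
by rewrite !E.
Qed.

Lemma lin_sum_l (R : realType) n (b : ('I_n -> R) -> ('I_n -> R) -> R) :
  cotangent_bilinear b -> forall (I : finType) (a : I -> R) (F : I -> 'I_n -> R) B,
  b (fun x => \sum_i a i * F i x) B = \sum_i a i * b (F i) B.
Proof.
move=> [L1 [L2 [L3 L4]]] I a F B.
rewrite /index_enum; elim: (Finite.enum I) => [|i s IH].
  rewrite big_nil; have -> : (fun x => \sum_(i <- [::]) a i * F i x) = (fun _ => 0).
    by apply: functional_extensionality => x; rewrite big_nil.
  by rewrite L3.
rewrite big_cons -IH -L1; congr b; apply: functional_extensionality => x.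
by rewrite big_cons.
Qed.

Lemma lin_sum_r (R : realType) n (b : ('I_n -> R) -> ('I_n -> R) -> R) :
  cotangent_bilinear b -> forall (I : finType) (a : I -> R) (F : I -> 'I_n -> R) A,
  b A (fun x => \sum_i a i * F i x) = \sum_i a i * b A (F i).
Proof.
move=> [L1 [L2 [L3 L4]]] I a F A.
rewrite /index_enum; elim: (Finite.enum I) => [|i s IH].
  rewrite big_nil; have -> : (fun x => \sum_(i <- [::]) a i * F i x) = (fun _ => 0).
    by apply: functional_extensionality => x; rewrite big_nil.
  by rewrite L4.
rewrite big_cons -IH -L2; congr b; apply: functional_extensionality => x.
by rewrite big_cons.
Qed.

Lemma fun_expand (R : realType) n (A : 'I_n -> R) :
  A = (fun x => \sum_i A i * dlt R i x).
Proof.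
apply: functional_extensionality => x; rewrite -(sum_delta x A).
by apply: eq_bigr => i _; rewrite /dlt mulrC eq_sym.
Qed.

Lemma bil_expand (R : realType) n (b : ('I_n -> R) -> ('I_n -> R) -> R) :
  cotangent_bilinear b -> forall A B,
  b A B = \sum_i \sum_j A i * B j * b (dlt R i) (dlt R j).
Proof.
move=> Hb A B; rewrite {1}(fun_expand A) lin_sum_l //.
apply: eq_bigr => i _; rewrite {1}(fun_expand B) lin_sum_r // mulr_sumr.
by apply: eq_bigr => j _; rewrite mulrA [A i * _]mulrC -mulrA mulrA.
Qed.

Definition invar (R : realType)
  (h : forall n : nat, ('I_n -> R) -> ('I_n -> R) -> ('I_n -> R) -> R) :=
  forall m n : nat, (2 <= m)%N -> (m <= n)%N ->
     forall W : 'I_m -> 'I_n -> R, markov_coembedding W ->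
     forall q : 'I_n -> R, posdist q ->
     forall A B : 'I_m -> R,
       h m (markov_map W q) A B = h n q (pullback W A) (pullback W B).

Definition sw n (a b : 'I_n) (x : 'I_n) : 'I_n :=
  if x == a then b else if x == b then a else x.

Lemma swK n (a b : 'I_n) : involutive (sw a b).
Proof.
move=> x; rewrite /sw.
case: (eqVneq x a) => [->|xa]; first by rewrite eqxx; case: eqVneq.
case: (eqVneq x b) => [->|xb]; first by rewrite eqxx.
by rewrite (negbTE xa) (negbTE xb).
Qed.

Lemma mm_Wf (R : realType) n m (f : 'I_n -> 'I_m) q y :
  markov_map (Wf R f) q y = \sum_x (f x == y)%:R * q x.
Proof. by []. Qed.

Lemma sw_inv (R : realType)
  (h : forall n : nat, ('I_n -> R) -> ('I_n -> R) -> ('I_n -> R) -> R)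
  (Hii : invar h) N (a b : 'I_N) : (2 <= N)%N ->
  forall A B, h N (unif R N) A B = h N (unif R N) (fun x => A (sw a b x)) (fun x => B (sw a b x)).
Proof.
move=> HN A B.
have Hco : markov_coembedding (Wf R (sw a b)).
  by apply: Wf_coemb => y; exists (sw a b y); rewrite swK.
have Hu : markov_map (Wf R (sw a b)) (unif R N) = unif R N.
  apply: functional_extensionality => y; rewrite mm_Wf.
  rewrite [RHS](_ : _ = unif R N (sw a b y)) // -(sum_delta (sw a b y) (unif R N)); apply: eq_bigr => x _.
  congr (_ * _); congr (_%:R).
  by rewrite -(inj_eq (can_inj (swK a b))) swK.
have := Hii N N HN (leqnn N) _ Hco (unif R N) (unif_posdist R (ltnW HN)) A B.
rewrite Hu => ->; congr h; apply: functional_extensionality => x; by rewrite pullback_Wf.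
Qed.

Definition dlt0 (R : realType) N : 'I_N -> R := fun i => (val i == 0%N)%:R.
Arguments dlt0 : clear implicits.

Definition cN (R : realType)
  (h : forall n : nat, ('I_n -> R) -> ('I_n -> R) -> ('I_n -> R) -> R) N : R :=
  h N (unif R N) (dlt0 R N) (dlt0 R N) * (N%:R ^+ 2) / (N%:R - 1).

Definition Gc (R : realType)
  (h : forall n : nat, ('I_n -> R) -> ('I_n -> R) -> ('I_n -> R) -> R) (c : R) n
  (q : 'I_n -> R) := forall A B, h n q A B = c * fisher_cometric q A B.

Lemma sw_a n (a b : 'I_n) : sw a b a = b. Proof. by rewrite /sw eqxx. Qed.
Lemma sw_b n (a b : 'I_n) : sw a b b = a.
Proof. by rewrite /sw eqxx; case: eqVneq => [->|]. Qed.
Lemma sw_c n (a b x : 'I_n) : x != a -> x != b -> sw a b x = x.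
Proof. by move=> /negbTE xa /negbTE xb; rewrite /sw xa xb. Qed.

Lemma unif_G (R : realType)
  (h : forall n : nat, ('I_n -> R) -> ('I_n -> R) -> ('I_n -> R) -> R)
  (Hh : forall n : nat, (2 <= n)%N -> contravariant_2tensor_field (h n))
  (Hii : invar h) N : (2 <= N)%N -> Gc h (cN h N) (unif R N).
Proof.
move=> HN A B.
have N0 : (0 < N)%N by apply: ltnW.
pose i0 : 'I_N := Ordinal N0.
have Hb : cotangent_bilinear (h N (unif R N)).
  by case: (Hh N HN) => H _; apply: H; apply: unif_posdist.
pose H i j := h N (unif R N) (dlt R i) (dlt R j).
have Hsw : forall a b i j, H i j = H (sw a b i) (sw a b j).
  move=> a b i j; rewrite /H (sw_inv Hii a b HN); congr h;
  apply: functional_extensionality => x; rewrite /dlt;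
  by rewrite -(inj_eq (can_inj (swK a b))) swK.
have Hdiag : forall i, H i i = H i0 i0.
  by move=> i; rewrite (Hsw i0 i i i) sw_b.
have Hrow : forall i, \sum_j H i j = 0.
  move=> i; have := lin_sum_r Hb (fun _ => 1) (@dlt R N) (dlt R i).
  have -> : (fun x => \sum_j (fun _ : 'I_N => 1) j * dlt R j x) = (fun _ => 1 : R).
    apply: functional_extensionality => x.
    by rewrite (eq_bigr (fun j => (x == j)%:R)) ?sum_delta1 // => j _; rewrite mul1r.
  case: Hb => _ [_ [_ L4]]; rewrite L4 => E.
  by rewrite /H (eq_bigr (fun j => 1 * h N (unif R N) (dlt R i) (dlt R j))) -?E // => j _; rewrite mul1r.
have Noff : forall i j, i != j -> H i j * (N%:R - 1) = - H i0 i0.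
  move=> i j ij.
  have Hk : forall k, k != i -> H i k = H i j.
    move=> k ki; case: (eqVneq k j) => [->//|kj].
    by rewrite (Hsw j k i j) sw_a sw_c // eq_sym.
  have := Hrow i; rewrite (bigD1 i) //= (eq_bigr (fun _ => H i j)) // Hdiag => E1.
  have E2 : \sum_(k < N) H i j = H i j + \sum_(k < N | k != i) H i j by rewrite (bigD1 i).
  move: E2; rewrite sumr_const cardT size_enum_ord -mulr_natr => E2.
  have : H i j * N%:R = H i j - H i0 i0 by lra.
  move=> E3; rewrite mulrBr mulr1; lra.
have N1 : (N%:R - 1 : R) != 0.
  rewrite subr_eq0 pnatr_eq1; apply/eqP => E; move: HN; by rewrite E.
have NN : (N%:R : R) != 0 by rewrite pnatr_eq0 -lt0n.
pose E := - H i0 i0 / (N%:R - 1).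
have Hform : forall i j, H i j = (i == j)%:R * (H i0 i0 - E) + E.
  move=> i j; case: (eqVneq i j) => [->|ij]; first by rewrite Hdiag mul1r subrK.
  rewrite mul0r add0r /E -(Noff i j ij) mulfK //.
rewrite (bil_expand Hb).
have -> : \sum_i \sum_j A i * B j * h N (unif R N) (dlt R i) (dlt R j) =
   (H i0 i0 - E) * \sum_i A i * B i + E * ((\sum_i A i) * (\sum_j B j)).
  transitivity (\sum_i ((H i0 i0 - E) * (A i * B i) + E * (A i * \sum_j B j))); last first.
    by rewrite big_split /= -!mulr_sumr -mulr_suml.
  apply: eq_bigr => i _.
  rewrite (eq_bigr (fun j => (i == j)%:R * (A i * B j * (H i0 i0 - E)) + A i * B j * E)); last first.
    by move=> j _; rewrite -/(H i j) Hform mulrDr mulrCA.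
  rewrite big_split /= sum_delta' -mulr_suml -mulr_sumr; congr (_ + _); first by rewrite mulrC.
  by rewrite mulrC.
rewrite /cN /fisher_cometric /expect /unif -!mulr_sumr.
have -> : dlt0 R N = dlt R i0.
  by apply: functional_extensionality => x; rewrite /dlt0 /dlt.
rewrite -/(H i0 i0) /E.
field; by rewrite N1 NN.
Qed.

Lemma unlift_wid n (x : 'I_n) : unlift ord_max (widen_ord (leqnSn n) x) = Some x.
Proof.
have -> : widen_ord (leqnSn n) x = lift ord_max x by apply: val_inj; rewrite /= /bump leqNgt ltn_ord.
by rewrite liftK.
Qed.

Definition ratpt (R : realType) n (k : 'I_n -> nat) : 'I_n -> R :=
  fun i => (k i)%:R / (\sum_j k j)%:R.

Lemma sum_ge (n : nat) (k : 'I_n -> nat) (i : 'I_n) :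
  (forall j, 0 < k j)%N -> (k i + n <= (\sum_j k j) + 1)%N.
Proof.
move=> kp.
have E1 : (\sum_j k j = k i + \sum_(j | j != i) k j)%N by rewrite (bigD1 i).
have E4 : (n.-1 <= \sum_(j | j != i) k j)%N.
  rewrite -[X in X.-1](card_ord n) -(cardC1 i) -sum1_card; apply: leq_sum => j _; apply: kp.
rewrite E1; have := ltn_ord i; lia.
Qed.

Lemma ratpt_posdist (R : realType) n (k : 'I_n -> nat) :
  (0 < n)%N -> (forall j, 0 < k j)%N -> posdist (ratpt R k).
Proof.
move=> n0 kp.
have S0 : (0 < \sum_j k j)%N.
  have := sum_ge (Ordinal n0) kp; have := kp (Ordinal n0); lia.
split; first by move=> i; rewrite /ratpt divr_gt0 // ltr0n.
by rewrite /ratpt -mulr_suml -natr_sum mulfV // pnatr_eq0 -lt0n.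
Qed.

Lemma ratG (R : realType)
  (h : forall n : nat, ('I_n -> R) -> ('I_n -> R) -> ('I_n -> R) -> R)
  (Hh : forall n : nat, (2 <= n)%N -> contravariant_2tensor_field (h n))
  (Hii : invar h) d : forall n (k : 'I_n -> nat), (2 <= n)%N ->
  (forall j, 0 < k j)%N -> (\sum_j k j = n + d)%N ->
  Gc h (cN h (n + d)) (ratpt R k).
Proof.
elim: d => [|d IH] n k Hn kp Sk.
  case: (boolP [exists i, 1 < k i]%N) => [/existsP [i ki]|nb].
    have := sum_ge i kp; lia.
  have k1 : forall j, k j = 1%N.
    move=> j; apply/eqP; rewrite eqn_leq kp andbT.
    apply: contraNT nb; rewrite -ltnNge => kj; apply/existsP; by exists j.
  have -> : ratpt R k = unif R n.
    apply: functional_extensionality => j; rewrite /ratpt Sk addn0 k1 /unif mul1r //.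
  rewrite addn0; exact: unif_G.
case: (boolP [exists i, 1 < k i]%N) => [/existsP [i ki]|nb]; last first.
  have k1 : forall j, k j = 1%N.
    move=> j; apply/eqP; rewrite eqn_leq kp andbT.
    apply: contraNT nb; rewrite -ltnNge => kj; apply/existsP; by exists j.
  move: Sk; rewrite (eq_bigr (fun _ => 1%N)) // sum1_card card_ord; lia.
pose k' : 'I_n.+1 -> nat := fun j =>
  if unlift ord_max j is Some j' then (if j' == i then (k i).-1 else k j') else 1%N.
pose f : 'I_n.+1 -> 'I_n := fun j => if unlift ord_max j is Some j' then j' else i.
have Hk'w : forall x, k' (widen_ord (leqnSn n) x) = if x == i then (k i).-1 else k x.
  by move=> x; rewrite /k' unlift_wid.
have Hk'm : k' ord_max = 1%N by rewrite /k' unlift_none.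
have Hfw : forall x, f (widen_ord (leqnSn n) x) = x by move=> x; rewrite /f unlift_wid.
have Hfm : f ord_max = i by rewrite /f unlift_none.
have kp' : forall j, (0 < k' j)%N.
  move=> j; rewrite /k'; case: (unlift ord_max j) => [j'|] //.
  case: (j' == i); last exact: kp.
  by rewrite -ltnS prednK // ltnW.
have S1 : (\sum_x (if x == i then (k i).-1 else k x) + 1 = \sum_j k j)%N.
  rewrite (bigD1 i) //= eqxx [RHS](bigD1 i) //=.
  rewrite (eq_bigr k); last by move=> x /negbTE ->.
  have := ltnW ki; lia.
have Sk' : (\sum_j k' j = n.+1 + d)%N.
  rewrite big_ord_recr /= Hk'm (eq_bigr (fun x => if x == i then (k i).-1 else k x)) ?S1 ?Sk;
    last by move=> x _; rewrite Hk'w.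
  lia.
have IH' := IH n.+1 k' (leqW Hn) kp' Sk'.
have Hrat : ratpt R k = markov_map (Wf R f) (ratpt R k').
  apply: functional_extensionality => y; rewrite mm_Wf big_ord_recr /= Hfm.
  rewrite (eq_bigr (fun x => (x == y)%:R * ratpt R k' (widen_ord (leqnSn n) x))); last first.
    by move=> x _; rewrite Hfw.
  rewrite sum_delta /ratpt Sk' Hk'w Hk'm addSnnS -Sk -S1.
  case: (eqVneq y i) => [->|yi].
    rewrite /= mulr1n mul1r -mulrDl natr1 prednK //; exact: ltnW.
  by rewrite /= mulr0n mul0r addr0.
rewrite -addSnnS => A B.
rewrite Hrat (Hii n n.+1 Hn (leqnSn n)) ?IH' ?cov_pull //.
- exact: Wf_det.
- by apply: Wf_coemb => y; exists (widen_ord (leqnSn n) y); rewrite Hfw.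
- by apply: ratpt_posdist.
Qed.

Lemma posdist_le1 (R : realType) n (p : 'I_n -> R) i : posdist p -> p i <= 1.
Proof.
move=> [p0 p1]; rewrite -p1 (bigD1 i) //= lerDl.
by apply: sumr_ge0 => j _; apply: ltW.
Qed.

Lemma ex_diff (R : realType) n (p q : 'I_n -> R) (eta : R) C :
  (forall i, `|q i - p i| <= eta) ->
  `|expect q C - expect p C| <= eta * \sum_i `|C i|.
Proof.
move=> H; rewrite /expect -sumrB mulr_sumr.
apply: le_trans (ler_norm_sum _ _ _) _; apply: ler_sum => i _.
by rewrite -mulrBl normrM; apply: ler_wpM2r.
Qed.

Lemma ex_bound (R : realType) n (q : 'I_n -> R) C :
  posdist q -> `|expect q C| <= \sum_i `|C i|.
Proof.
move=> Hq; rewrite /expect; apply: le_trans (ler_norm_sum _ _ _) _; apply: ler_sum => i _.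
rewrite normrM -[X in _ <= X]mul1r; apply: ler_wpM2r => //.
have [q0 _] := Hq; rewrite ger0_norm ?(ltW (q0 i)) //; exact: posdist_le1.
Qed.

Lemma cov_cont (R : realType) n (p q : 'I_n -> R) (eta : R) A B :
  0 <= eta -> posdist p -> posdist q -> (forall i, `|q i - p i| <= eta) ->
  `|fisher_cometric q A B - fisher_cometric p A B| <=
  eta * (\sum_i `|A i * B i| + 2 * ((\sum_i `|A i|) * (\sum_i `|B i|))).
Proof.
move=> eta0 Hp Hq H.
have -> : fisher_cometric q A B - fisher_cometric p A B =
  (expect q (fun i => A i * B i) - expect p (fun i => A i * B i)) -
  ((expect q A - expect p A) * expect q B + expect p A * (expect q B - expect p B)).
  rewrite /fisher_cometric; ring.
have h1 := ex_diff (fun i => A i * B i) H.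
have h2 : `|(expect q A - expect p A) * expect q B| <= eta * (\sum_i `|A i|) * (\sum_i `|B i|).
  rewrite normrM; apply: ler_pM; [exact: normr_ge0|exact: normr_ge0|exact: (ex_diff A H)|exact: ex_bound].
have h3 : `|expect p A * (expect q B - expect p B)| <= (\sum_i `|A i|) * (eta * \sum_i `|B i|).
  rewrite normrM; apply: ler_pM; [exact: normr_ge0|exact: normr_ge0|exact: ex_bound|exact: (ex_diff B H)].
have t1 := ler_normB (expect q (fun i => A i * B i) - expect p (fun i => A i * B i))
  ((expect q A - expect p A) * expect q B + expect p A * (expect q B - expect p B)).
have t2 := ler_normD ((expect q A - expect p A) * expect q B) (expect p A * (expect q B - expect p B)).
move: h1 h2 h3 t1 t2.
set a := \sum_i `|A i|; set b := \sum_i `|B i|; set s := \sum_i `|A i * B i|.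
move=> h1 h2 h3 t1 t2.
have -> : eta * (s + 2 * (a * b)) = eta * s + eta * a * b + a * (eta * b) by ring.
lra.
Qed.

Lemma dense (R : realType) n (p : 'I_n -> R) : (0 < n)%N -> posdist p ->
  forall eta : R, 0 < eta -> exists k : 'I_n -> nat,
  (forall j, 0 < k j)%N /\ forall i, `|ratpt R k i - p i| < eta.
Proof.
move=> n0 Hp eta eta0.
pose K := (Num.truncn (n%:R / eta)).+1.
have HK : n%:R < eta * K%:R.
  have := truncnS_gt (n%:R / eta); rewrite -/K ltr_pdivrMr // mulrC //.
have [p0 p1] := Hp.
pose k : 'I_n -> nat := fun i => (Num.truncn (p i * K%:R)).+1.
exists k; split => // i.
have kb : forall j, p j * K%:R < (k j)%:R /\ (k j)%:R <= p j * K%:R + 1.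
  move=> j; split; first exact: truncnS_gt.
  rewrite /k -natr1 lerD2r truncn_le mulr_ge0 // ?ler0n //; exact: ltW.
pose S : R := (\sum_j k j)%:R.
have SK : K%:R <= S.
  have EK : (K%:R : R) = \sum_j p j * K%:R by rewrite -mulr_suml p1 mul1r.
  rewrite /S natr_sum EK; apply: ler_sum => j _.
  by case: (kb j) => /ltW.
have SKn : S <= K%:R + n%:R.
  have EK : (K%:R : R) = \sum_j p j * K%:R by rewrite -mulr_suml p1 mul1r.
  rewrite /S natr_sum EK.
  have -> : (n%:R : R) = \sum_(j < n) 1 by rewrite sumr_const card_ord.
  rewrite -big_split /=; apply: ler_sum => j _; by case: (kb j).
have n1 : 1 <= (n%:R : R) by rewrite ler1n.
have K0 : 0 < (K%:R : R) by rewrite ltr0n.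
have S0 : 0 < S by apply: lt_le_trans SK.
have pi1 := posdist_le1 i Hp.
have pi0 := p0 i.
case: (kb i) => ki1 ki2.
have f1 : 0 <= p i * (S - K%:R) by apply: mulr_ge0; [exact: ltW | rewrite subr_ge0].
have f2 : 0 <= p i * (K%:R + n%:R - S) by apply: mulr_ge0; [exact: ltW | rewrite subr_ge0].
have f3 : 0 <= eta * (S - K%:R) by apply: mulr_ge0; [exact: ltW | rewrite subr_ge0].
have f4 : 0 <= n%:R * (1 - p i) by apply: mulr_ge0; [exact: ler0n | rewrite subr_ge0].
have -> : ratpt R k i - p i = ((k i)%:R - p i * S) / S.
  by rewrite /ratpt -/S; field; rewrite gt_eqF.
rewrite ltr_norml ltr_pdivrMr // ltr_pdivlMr // -/S.
apply/andP; split; nra.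
Qed.

Lemma fisher_u2 (R : realType) :
  fisher_cometric (unif R 2) (dlt0 R 2) (dlt0 R 2) = 4^-1.
Proof.
rewrite /fisher_cometric /expect /unif /dlt0 !big_ord_recl big_ord0 /=.
rewrite !mulr1n !mulr0n !big_ord0; field; rewrite ?pnatr_eq0 // ?mulf_neq0 ?pnatr_eq0 //.
Qed.

Lemma ratG2 (R : realType)
  (h : forall n : nat, ('I_n -> R) -> ('I_n -> R) -> ('I_n -> R) -> R)
  (Hh : forall n : nat, (2 <= n)%N -> contravariant_2tensor_field (h n))
  (Hii : invar h) n (k : 'I_n -> nat) : (2 <= n)%N ->
  (forall j, 0 < k j)%N -> Gc h (cN h 2) (ratpt R k).
Proof.
move=> Hn kp.
pose K := (\sum_j k j)%N.
have nK : (n <= K)%N.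
  have := sum_ge (Ordinal (ltnW Hn)) kp; have := kp (Ordinal (ltnW Hn)); rewrite /K; lia.
pose k2 : 'I_n -> nat := fun i => (2 * k i)%N.
have S2 : (\sum_j k2 j = n + (2 * K - n))%N.
  rewrite /k2 -big_distrr /= -/K; lia.
have k2p : forall j, (0 < k2 j)%N by move=> j; rewrite /k2 muln_gt0 kp.
have G1 := ratG Hh Hii Hn k2p S2.
have E1 : ratpt R k2 = ratpt R k.
  apply: functional_extensionality => i; rewrite /ratpt /k2 -big_distrr /= !natrM.
  have K0 : ((\sum_j k j)%:R : R) != 0.
    rewrite pnatr_eq0 -lt0n -/K; have := ltnW Hn; lia.
  field; by rewrite K0.
pose kk : 'I_2 -> nat := fun _ => K.
have S3 : (\sum_j kk j = 2 + (2 * K - 2))%N.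
  rewrite /kk sum_nat_const card_ord; lia.
have G2 := ratG Hh Hii (leqnn 2) (fun j => leq_trans (ltnW Hn) nK) S3.
have E2 : ratpt R kk = unif R 2.
  apply: functional_extensionality => i; rewrite /ratpt /kk /unif sum_nat_const card_ord.
  have K0 : (K%:R : R) != 0 by rewrite pnatr_eq0 -lt0n; have := ltnW Hn; lia.
  rewrite natrM; field; by rewrite K0.
have eq1 : (n + (2 * K - n) = 2 * K)%N by lia.
have eq2 : (2 + (2 * K - 2) = 2 * K)%N by lia.
rewrite eq1 E1 in G1; rewrite eq2 E2 in G2.
have G3 := unif_G Hh Hii (leqnn 2).
have Ec : cN h (2 * K) = cN h 2.
  have := G2 (dlt0 R 2) (dlt0 R 2); rewrite G3 fisher_u2 => /mulIf -> //.
  by rewrite invr_eq0 pnatr_eq0.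
by rewrite -Ec.
Qed.

Lemma dir2 (R : realType)
  (h : forall n : nat, ('I_n -> R) -> ('I_n -> R) -> ('I_n -> R) -> R)
  (Hh : forall n : nat, (2 <= n)%N -> contravariant_2tensor_field (h n))
  (Hii : invar h) :
  exists c : R, forall n : nat, (2 <= n)%N ->
     forall p : 'I_n -> R, posdist p ->
     forall A B : 'I_n -> R, h n p A B = c * fisher_cometric p A B.
Proof.
exists (cN h 2) => n Hn p Hp A B.
set c := cN h 2.
apply/eqP; rewrite -subr_eq0; apply/negPn/negP => nx.
set x := h n p A B - c * fisher_cometric p A B in nx.
pose eps := `|x|.
have eps0 : 0 < eps by rewrite normr_gt0.
have [_ Hcont] := Hh n Hn.
have [d1 d10 Hd1] := Hcont A B p Hp (eps / 2) (divr_gt0 eps0 (ltr0n _ 2)).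
pose M := \sum_i `|A i * B i| + 2 * ((\sum_i `|A i|) * (\sum_i `|B i|)).
have M0 : 0 <= M.
  apply: addr_ge0; first by apply: sumr_ge0 => i _.
  apply: mulr_ge0 => //; apply: mulr_ge0; by apply: sumr_ge0.
pose a := `|c|.
have a0 : 0 <= a by apply: normr_ge0.
pose e2 := eps / (2 * (a * M + 1)).
have aM1 : 0 < a * M + 1 by have := mulr_ge0 a0 M0; lra.
have e20 : 0 < e2 by apply: divr_gt0 => //; apply: mulr_gt0.
have Ee2 : e2 * (2 * (a * M + 1)) = eps by rewrite /e2 mulfVK // mulf_neq0 // ?pnatr_eq0 // gt_eqF.
pose eta := Num.min d1 e2.
have eta0 : 0 < eta by rewrite lt_min d10 e20.
have [k [kp Hk]] := dense (ltnW Hn) Hp eta0.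
have Hq := ratpt_posdist R (ltnW Hn) kp.
have G := ratG2 Hh Hii Hn kp A B.
have Hclose1 : forall i, `|ratpt R k i - p i| < d1.
  by move=> i; apply: lt_le_trans (Hk i) _; rewrite ge_min lexx.
have Hclose2 : forall i, `|ratpt R k i - p i| <= eta by move=> i; apply: ltW.
have T1 := Hd1 _ Hq Hclose1.
have T2 := cov_cont A B (ltW eta0) Hp Hq Hclose2.
have etae2 : eta <= e2 by rewrite ge_min lexx orbT.
have T3 : a * `|fisher_cometric (ratpt R k) A B - fisher_cometric p A B| <= a * (e2 * M).
  apply: ler_wpM2l => //; apply: le_trans T2 _; apply: ler_wpM2r => //.
have T4 : `|x| <= `|h n (ratpt R k) A B - h n p A B| +
     a * `|fisher_cometric (ratpt R k) A B - fisher_cometric p A B|.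
  have -> : x = - (h n (ratpt R k) A B - h n p A B) +
     c * (fisher_cometric (ratpt R k) A B - fisher_cometric p A B).
    by rewrite /x G -/c; ring.
  by apply: le_trans (ler_normD _ _) _; rewrite normrN normrM.
move: T1 T3 T4 Ee2; rewrite -/eps; move=> T1 T3 T4 Ee2.
have : eps < eps by nra.
by rewrite ltxx.
Qed.

Theorem mainTheorem8 (R : realType)
  (h : forall n : nat, ('I_n -> R) -> ('I_n -> R) -> ('I_n -> R) -> R)
  (Hh : forall n : nat, (2 <= n)%N -> contravariant_2tensor_field (h n)) :
  (exists c : R, forall n : nat, (2 <= n)%N ->
     forall p : 'I_n -> R, posdist p ->
     forall A B : 'I_n -> R, h n p A B = c * fisher_cometric p A B)
  <->
  (forall m n : nat, (2 <= m)%N -> (m <= n)%N ->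
     forall W : 'I_m -> 'I_n -> R, markov_coembedding W ->
     forall q : 'I_n -> R, posdist q ->
     forall A B : 'I_m -> R,
       h m (markov_map W q) A B = h n q (pullback W A) (pullback W B)).
Proof.
split; first exact: dir1.
by move=> Hii; apply: dir2.
Qed.
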